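(* Let $k'>k$ be natural numbers and let $\mathcal D$ be a class of $k$-ary upwards-closed (not necessarily first-order) dependency notions. Then the $k'$-ary totality atom $\mathrm{All}_{k'}$ is not definable in $\mathbf{FO}(=\!(\cdot),\mathcal D,\sqcup)$.
   Context: Team semantics (lax version). For a structure $\mathfrak M$ with domain $M$, a team $X$ is a (possibly empty) set of assignments $s:V\to M$, $V$ a finite set of variables; for a tuple $\vec v$ of variables in $V$, $X(\vec v)=\{s(\vec v):s\in X\}$. Satisfaction for formulas in negation normal form: first-order literal $\alpha$: every $s\in X$ satisfies $\alpha$ (Tarski); $\psi\vee\theta$: $X=Y\cup Z$ with $\mathfrak M\models_Y\psi$, $\mathfrak M\models_Z\theta$; $\psi\wedge\theta$: both; $\exists v\psi$: some $F:X\to\mathcal P(M)\setminus\{\emptyset\}$ with $\mathfrak M\models_{X[F/v]}\psi$, $X[F/v]=\{s[m/v]:s\in X,m\in F(s)\}$; $\forall v\psi$: $\mathfrak M\models_{X[M/v]}\psi$, $X[M/v]=\{s[m/v]:s\in X,m\in M\}$. A $k$-ary dependency notion $\mathbf D$ is an isomorphism-closed class of structures $(M,R)$ with $R$ a $k$-ary relation; the atom $\mathbf D\vec v$ (for a $k$-tuple $\vec v$ of variables) satisfies $\mathfrak M\models_X\mathbf D\vec v$ iff $(M,X(\vec v))\in\mathbf D$. $\mathbf D$ is upwards-closed if $(M,R)\in\mathbf D$ and $R\subseteq S$ imply $(M,S)\in\mathbf D$. The constancy atoms $=\!(\vec v)$ (all arities): $\mathfrak M\models_X=\!(\vec v)$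 iff $s(\vec v)=s'(\vec v)$ for all $s,s'\in X$. The $k'$-ary totality atom: $\mathfrak M\models_X\mathrm{All}_{k'}(\vec v)$ iff $X(\vec v)=M^{k'}$. Classical disjunction: $\mathfrak M\models_X\phi\sqcup\psi$ iff $\mathfrak M\models_X\phi$ or $\mathfrak M\models_X\psi$. A $k'$-ary dependency $\mathbf E$ is definable in a logic $L$ if there is a formula $\theta(\vec v)$ of $L$ over the empty vocabulary, with $\vec v$ a tuple of $k'$ distinct variables, such that $\mathfrak M\models_X\mathbf E\vec v$ iff $\mathfrak M\models_X\theta(\vec v)$ for all structures $\mathfrak M$ and all teams $X$ whose domain contains $\vec v$. *)

(* Defs.v *)
From mathcomp Require Import all_boot.

Set Implicit Arguments.
Unset Strict Implicit.
Unset Printing Implicit Defensive.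

(** Variables are natural numbers. An assignment with finite domain V is a
    partial map [nat -> option M] defined exactly on V. A team is a set
    (predicate) of assignments. *)
Definition assignment (M : Type) := nat -> option M.
Definition team (M : Type) := assignment M -> Prop.

Definition team_dom (M : Type) (X : team M) (V : seq nat) : Prop :=
  forall s, X s -> forall x, (s x <> None <-> x \in V).

Definition upd (M : Type) (s : assignment M) (v : nat) (m : M) : assignment M :=
  fun x => if x == v then Some m else s x.

Definition team_rel (M : Type) (k : nat) (X : team M) (vs : 'I_k -> nat)
  : ('I_k -> M) -> Prop :=
  fun t => exists s, X s /\ forall i, s (vs i) = Some (t i).

(** A k-ary "dependency notion candidate": for each domain M, a class of
    k-ary relations on M (i.e. a class of structures (M,R)). *)
Definition DepNotion (k : nat) := forall M : Type, (('I_k -> M) -> Prop) -> Prop.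

Definition iso_closed (k : nat) (D : DepNotion k) : Prop :=
  forall (M N : Type) (f : M -> N) (g : N -> M),
    cancel f g -> cancel g f ->
    forall R : ('I_k -> M) -> Prop,
      D M R <-> D N (fun t => R (fun i => g (t i))).

Definition dependency_notion (k : nat) (D : DepNotion k) : Prop := iso_closed D.

Definition upwards_closed (k : nat) (D : DepNotion k) : Prop :=
  forall (M : Type) (R S : ('I_k -> M) -> Prop),
    D M R -> (forall t, R t -> S t) -> D M S.

Definition AllDep (k' : nat) : DepNotion k' := fun M R => forall t, R t.

(** * Syntax of FO(=(.), D, ⊔) in negation normal form, empty vocabulary.
    Dependency atoms carry a k-ary dependency notion; membership in the
    class D is imposed by [in_logic]. *)
Inductive form (k : nat) : Type :=
| FEq    : nat -> nat -> form k
| FNeq   : nat -> nat -> form k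
| FConst : seq nat -> form k
| FDep   : DepNotion k -> ('I_k -> nat) -> form k
| FAnd   : form k -> form k -> form k
| FOr    : form k -> form k -> form k
| FCOr   : form k -> form k -> form k
| FEx    : nat -> form k -> form k
| FAll   : nat -> form k -> form k.

Fixpoint sat (k : nat) (M : Type) (X : team M) (phi : form k) {struct phi} : Prop :=
  match phi with
  | FEq x y => forall s, X s -> exists a, s x = Some a /\ s y = Some a
  | FNeq x y => forall s, X s ->
      exists a b, s x = Some a /\ s y = Some b /\ a <> b
  | FConst vs => forall s s', X s -> X s' -> forall x, x \in vs -> s x = s' x
  | FDep D vs => D M (team_rel X vs)
  | FAnd p q => sat X p /\ sat X q
  | FOr p q => exists Y Z : team M,
      (forall s, X s <-> (Y s \/ Z s)) /\ sat Y p /\ sat Z q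
  | FCOr p q => sat X p \/ sat X q
  | FEx v p => exists F : assignment M -> M -> Prop,
      (forall s, X s -> exists m, F s m) /\
      sat (fun s' => exists s m, X s /\ F s m /\ forall x, s' x = upd s v m x) p
  | FAll v p =>
      sat (fun s' => exists s m, X s /\ forall x, s' x = upd s v m x) p
  end.

Fixpoint fv (k : nat) (phi : form k) : seq nat :=
  match phi with
  | FEq x y | FNeq x y => [:: x; y]
  | FConst vs => vs
  | FDep _ vs => [seq vs i | i <- enum 'I_k]
  | FAnd p q | FOr p q | FCOr p q => fv p ++ fv q
  | FEx v p | FAll v p => [seq x <- fv p | x != v]
  end.

Fixpoint in_logic (k : nat) (Dcls : DepNotion k -> Prop) (phi : form k) : Prop :=
  match phi with
  | FEq _ _ | FNeq _ _ | FConst _ => True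
  | FDep D _ => Dcls D
  | FAnd p q | FOr p q | FCOr p q => in_logic Dcls p /\ in_logic Dcls q
  | FEx _ p | FAll _ p => in_logic Dcls p
  end.

Definition definable (k k' : nat) (Dcls : DepNotion k -> Prop) (E : DepNotion k') : Prop :=
  exists (vs : 'I_k' -> nat) (theta : form k),
    injective vs /\ in_logic Dcls theta /\
    (forall x, x \in fv theta -> exists i, vs i = x) /\
    forall (M : Type) (X : team M) (V : seq nat),
      inhabited M -> team_dom X V -> (forall i, vs i \in V) ->
      (E M (team_rel X vs) <-> sat X theta).

(* Main.v *)
Require Import Defs.
From mathcomp Require Import all_boot.
From Stdlib Require Import Classical.
From Stdlib Require List.
From mathcomp Require Import zify.

Set Implicit Arguments.
Unset Strict Implicit.

Lemma cover (T : eqType) B (Q : T -> B -> Prop) (L : seq T) :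
  exists l' : seq B, size l' <= size L /\
    (forall b, List.In b l' -> exists a, Q a b) /\
    forall a, a \in L -> (exists b, Q a b) -> exists b, List.In b l' /\ Q a b.
Proof.
elim: L => [|x L [l' [H1 [H2 H3]]]].
  by exists [::]; split=> //; split=> // b [].
case: (classic (exists b, Q x b)) => [[b Hb]|Hn].
- exists (b :: l'); split; first by rewrite /= ltnS.
  split.
    by move=> b' /= [<-|/H2] //; exists x.
  move=> a; rewrite in_cons => /orP [/eqP -> _|/H3 h hc].
    by exists b; split=> //; left.
  by have [c [? ?]] := h hc; exists c; split=> //; right.
- exists l'; split; first by apply: leqW.
  split=> // a; rewrite in_cons => /orP [/eqP -> hc|/H3 //].
  by case: Hn.
Qed.

Lemma pull A B (P : A -> B -> Prop) (l : seq A) :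
  (forall a, List.In a l -> exists b, P a b) ->
  exists l' : seq B, size l' <= size l /\
    (forall b, List.In b l' -> exists a, List.In a l /\ P a b) /\
    forall a, List.In a l -> exists b, List.In b l' /\ P a b.
Proof.
elim: l => [|x l IH] H.
  by exists [::]; split=> //; split=> // b [].
have [b Hb] := H x (or_introl erefl).
have [l' [H1 [H2 H3]]] : exists l' : seq B, size l' <= size l /\
    (forall b, List.In b l' -> exists a, List.In a l /\ P a b) /\
    forall a, List.In a l -> exists b, List.In b l' /\ P a b.
  by apply: IH => a ha; apply: H; right.
exists (b :: l'); split; first by rewrite /= ltnS.
split.
  move=> b' /= [<-|/H2 [a [? ?]]]; first by exists x; split=> //; left.
  by exists a; split=> //; right.
move=> a /= [<-|/H3 [c [? ?]]]; first by exists b; split=> //; left.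
by exists c; split=> //; right.
Qed.

Fixpoint ndep (k : nat) (phi : form k) : nat :=
  match phi with
  | FDep _ _ => 1
  | FAnd p q | FOr p q | FCOr p q => ndep p + ndep q
  | FEx _ p | FAll _ p => ndep p
  | _ => 0
  end.

Lemma key (k : nat) (Dcls : DepNotion k -> Prop) (M : finType) :
  (forall D, Dcls D -> upwards_closed D) ->
  forall phi : form k, in_logic Dcls phi ->
  forall X : team M, sat X phi ->
  exists Y : seq (assignment M), size Y <= ndep phi * #|M| ^ k /\
    (forall s, List.In s Y -> X s) /\
    forall Z : team M, (forall s, List.In s Y -> Z s) -> (forall s, Z s -> X s) ->
      sat Z phi.
Proof.
move=> Hup; elim=> [x y|x y|vs|D vs|p IHp q IHq|p IHp q IHq|p IHp q IHq|v p IHp|v p IHp] /=.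
- move=> _ X H; exists [::]; split=> //; split=> // Z _ HZ s /HZ; exact: H.
- move=> _ X H; exists [::]; split=> //; split=> // Z _ HZ s /HZ; exact: H.
- move=> _ X H; exists [::]; split=> //; split=> // Z _ HZ s s' /HZ h /HZ h'; exact: H.
- move=> HD X H.
  have [l' [H1 [H2 H3]]] := cover (fun (f : {ffun 'I_k -> M}) (s : assignment M) =>
      X s /\ forall i, s (vs i) = Some (f i)) (enum {ffun 'I_k -> M}).
  exists l'; split.
    by rewrite mul1n; apply: (leq_trans H1); rewrite -cardE card_ffun card_ord.
  split; first by move=> s /H2 [a [? ?]].
  move=> Z HYZ _; apply: (Hup _ HD _ _ _ H) => t [s [Xs Hs]].
  have [b [Hb [_ Hb2]]] := H3 (finfun t) (mem_enum _ _) (ex_intro _ s (conj Xs (fun i => etrans (Hs i) (congr1 Some (esym (ffunE _ _)))))).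
  exists b; split; first exact: HYZ.
  by move=> i; rewrite Hb2 ffunE.
- move=> [Hp Hq] X [Xp Xq].
  have [Y1 [S1 [I1 C1]]] := IHp Hp X Xp.
  have [Y2 [S2 [I2 C2]]] := IHq Hq X Xq.
  exists (Y1 ++ Y2); split; first by rewrite size_cat mulnDl leq_add.
  split; first by move=> s /List.in_app_iff [/I1|/I2].
  move=> Z HYZ HZX; split.
    by apply: C1 => // s hs; apply: HYZ; apply/List.in_app_iff; left.
  by apply: C2 => // s hs; apply: HYZ; apply/List.in_app_iff; right.
- move=> [Hp Hq] X [A [B [HAB [Ap Bq]]]].
  have [Y1 [S1 [I1 C1]]] := IHp Hp A Ap.
  have [Y2 [S2 [I2 C2]]] := IHq Hq B Bq.
  exists (Y1 ++ Y2); split; first by rewrite size_cat mulnDl leq_add.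
  split.
    by move=> s /List.in_app_iff [/I1 h|/I2 h]; apply/HAB; [left|right].
  move=> Z HYZ HZX; exists (fun s => Z s /\ A s), (fun s => Z s /\ B s); split.
    move=> s; split.
      by move=> Zs; case: (proj1 (HAB s) (HZX s Zs)) => h; [left|right].
    by case=> [[]|[]].
  split.
    apply: C1 => [s hs|s []//]; split; last exact: I1.
    by apply: HYZ; apply/List.in_app_iff; left.
  apply: C2 => [s hs|s []//]; split; last exact: I2.
  by apply: HYZ; apply/List.in_app_iff; right.
- move=> [Hp Hq] X [Xp|Xq].
    have [Y1 [S1 [I1 C1]]] := IHp Hp X Xp.
    exists Y1; split; first by apply: (leq_trans S1); rewrite leq_mul2r leq_addr orbT.
    by split=> // Z HYZ HZX; left; apply: C1.
  have [Y1 [S1 [I1 C1]]] := IHq Hq X Xq.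
  exists Y1; split; first by apply: (leq_trans S1); rewrite leq_mul2r leq_addl orbT.
  by split=> // Z HYZ HZX; right; apply: C1.
- move=> Hp X [F [HF XF]].
  have [Y' [S' [I' C']]] := IHp Hp _ XF.
  have [Y [SY [IY CY]]] := @pull _ _ (fun (s' s : assignment M) => X s /\ exists m, F s m /\ forall x, s' x = upd s v m x) Y'
    (fun a ha => match I' a ha with ex_intro s (ex_intro m (conj h1 h2)) => ex_intro _ s (conj h1 (ex_intro _ m h2)) end).
  exists Y; split; first exact: leq_trans SY S'.
  split; first by move=> s /IY [a [_ []]].
  move=> Z HYZ HZX; exists F; split; first by move=> s /HZX /HF.
  apply: C'.
    move=> s' /CY [s [Hs [_ [m [Fm Hm]]]]].
    by exists s, m; split; [apply: HYZ|split].
  by move=> s' [s [m [Zs [Fm Hm]]]]; exists s, m; split; [apply: HZX|split].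
- move=> Hp X XF.
  have [Y' [S' [I' C']]] := IHp Hp _ XF.
  have [Y [SY [IY CY]]] := @pull _ _ (fun (s' s : assignment M) => X s /\ exists m, forall x, s' x = upd s v m x) Y'
    (fun a ha => match I' a ha with ex_intro s (ex_intro m (conj h1 h2)) => ex_intro _ s (conj h1 (ex_intro _ m h2)) end).
  exists Y; split; first exact: leq_trans SY S'.
  split; first by move=> s /IY [a [_ []]].
  move=> Z HYZ HZX.
  apply: C'.
    move=> s' /CY [s [Hs [_ [m Hm]]]].
    by exists s, m; split; [apply: HYZ|].
  by move=> s' [s [m [Zs Hm]]]; exists s, m; split; [apply: HZX|].
Qed.

Lemma In_has (T : Type) (p : pred T) (s : T) (Y : seq T) :
  List.In s Y -> p s -> has p Y.
Proof. by elim: Y => //= a Y IH [<- ->|/IH h /h ->]; rewrite ?orbT. Qed.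

Theorem mainTheorem3 (k k' : nat) (Dcls : DepNotion k -> Prop) :
  k < k' ->
  (forall D, Dcls D -> dependency_notion D /\ upwards_closed D) ->
  ~ definable Dcls (@AllDep k').
Proof.
move=> ltkk' HD [vs [theta [Hinj [Hin [Hfv Hdef]]]]].
pose c := ndep theta; pose m := c.+2; pose M := 'I_m.
pose V := map vs (enum 'I_k').
pose X : team M := fun s => forall x, s x <> None <-> x \in V.
pose mk (t : 'I_k' -> M) : assignment M :=
  fun x => match [pick i | vs i == x] with Some i => Some (t i) | None => None end.
have mkv t i : mk t (vs i) = Some (t i).
  rewrite /mk; case: pickP => [j /eqP /Hinj -> //|H].
  by have := H i; rewrite eqxx.
have Xmk t : X (mk t).
  move=> x; rewrite /mk; case: pickP => [j /eqP <-|H].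
    by split=> // _; apply: map_f; rewrite mem_enum.
  split=> // /mapP [i _ ex]; by have := H i; rewrite ex eqxx.
have inhM : inhabited M by constructor; exact: ord0.
have HV i : vs i \in V by apply: map_f; rewrite mem_enum.
have satX : sat X theta.
  apply/(Hdef M X V inhM) => // t; exists (mk t); split=> //.
have [Y [SY [IY CY]]] := key (fun D h => proj2 (HD D h)) Hin satX.
pose Z : team M := fun s => List.In s Y.
have satZ : sat Z theta by apply: CY.
have AZ : AllDep (team_rel Z vs).
  apply/(Hdef M Z V inhM) => // s /IY; exact.
pose p (f : {ffun 'I_k' -> M}) := fun s : assignment M => [forall i, s (vs i) == Some (f i)].
have hasp f : has (p f) Y.
  have [s [Zs Hs]] := AZ f.
  by apply: (In_has Zs); apply/forallP => i; rewrite Hs.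
pose g f := find (p f) Y.
have glt f : g f < (size Y).+1 by apply: leqW; rewrite -has_find.
pose h f : 'I_(size Y).+1 := inord (g f).
have hinj : injective h.
  move=> f1 f2 /(congr1 val) /=; rewrite !inordK // => e.
  have := nth_find (fun _ => None) (hasp f1).
  have := nth_find (fun _ => None) (hasp f2).
  rewrite -/(g f1) -/(g f2) e => /forallP P2 /forallP P1.
  apply/ffunP => i; have := P1 i; have := P2 i.
  by move=> /eqP -> /eqP [].
have := leq_card _ hinj; rewrite card_ffun !card_ord => hc.
have hm : m ^ k.+1 <= m ^ k' by rewrite leq_pexp2l.
have := leq_trans hm hc; rewrite expnS.
have : 0 < m ^ k by rewrite expn_gt0.
move: SY; rewrite card_ord -/c /m.
move: (c.+2 ^ k) => P; move: (size Y) => n.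
rewrite !mulSn.
move=> h1 h2 h3.
lia.
Qed.
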